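(* Let $p$ be an odd prime, $q\in\mathbb{C}_p$ with $|q-1|_p<1$, $\alpha\in\mathbb{N}\cup\{0\}$, $h\in\mathbb{N}$, and let $n,k$ be nonnegative integers with $n>k$. Then \[ \sum_{l=0}^{n-k}\binom{n-k}{l}(-1)^l\frac{\widetilde{G}_{l+k+1,q}^{(\alpha,h)}}{l+k+1}=\begin{cases}[2]_q+q^{h+1}\dfrac{\widetilde{G}_{n+1,q^{-1}}^{(\alpha,h)}}{n+1} & \text{if } k=0,\\[2mm] \displaystyle\sum_{l=0}^{k}\binom{k}{l}(-1)^{k+l}\Big\{[2]_q+q^{h+1}\frac{\widetilde{G}_{n-l+1,q^{-1}}^{(\alpha,h)}}{n-l+1}\Big\} & \text{if } k\neq 0.\end{cases} \]
   Context: For $x\in\mathbb{Z}_p$ write $[x]_q=\frac{1-q^x}{1-q}$, and $[2]_q=1+q$. For a uniformly differentiable $f:\mathbb{Z}_p\to\mathbb{C}_p$, the fermionic $p$-adic $q$-integral is $\int_{\mathbb{Z}_p}f(\xi)\,d\mu_{-q}(\xi)=\lim_{N\to\infty}\frac{1}{[p^N]_{-q}}\sum_{\xi=0}^{p^N-1}f(\xi)(-q)^{\xi}$, with $[p^N]_{-q}=\frac{1+q^{p^N}}{1+q}$. The $(h,q)$-Genocchi polynomials with weight $\alpha$ are defined for $n\ge0$, $x\in\mathbb{Z}_p$ by $\frac{\widetilde{G}_{n+1,q}^{(\alpha,h)}(x)}{n+1}=\int_{\mathbb{Z}_p}q^{(h-1)\xi}[x+\xi]_{q^{\alpha}}^n\,d\mu_{-q}(\xi)$,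 and the numbers are $\widetilde{G}_{n,q}^{(\alpha,h)}=\widetilde{G}_{n,q}^{(\alpha,h)}(0)$. The numbers $\widetilde{G}_{n,q^{-1}}^{(\alpha,h)}$ are obtained by replacing $q$ by $q^{-1}$ everywhere: $\frac{\widetilde{G}_{n+1,q^{-1}}^{(\alpha,h)}}{n+1}=\int_{\mathbb{Z}_p}q^{(1-h)\xi}[\xi]_{q^{-\alpha}}^n\,d\mu_{-q^{-1}}(\xi)$. *)

(* Defs.v *)
From HB Require Import structures.
From mathcomp Require Import all_boot all_order all_algebra.
From mathcomp Require Import reals.
From Stdlib Require Import ClassicalEpsilon.
Set Implicit Arguments. Unset Strict Implicit. Unset Printing Implicit Defensive.
Import Order.TTheory GRing.Theory Num.Theory.
Local Open Scope ring_scope.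

(* Abstract model of C_p: an algebraically closed field K of characteristic 0
   with a complete non-archimedean absolute value |.| : K -> R normalised by
   |p| = 1/p.  (C_p is such a field; there is no C_p in the libraries.) *)
Record padic_abs (K : closedFieldType) (R : realType) (p : nat) (abs : K -> R)
  : Prop := {
  pabs_ge0 : forall x, 0 <= abs x;
  pabs_eq0 : forall x, abs x = 0 <-> x = 0;
  pabs_mul : forall x y, abs (x * y) = abs x * abs y;
  pabs_ultra : forall x y, abs (x + y) <= Num.max (abs x) (abs y);
  pabs_p : abs (p%:R) = (p%:R)^-1;
  pchar0 : forall n : nat, (0 < n)%N -> (n%:R : K) != 0;
  pcomplete : forall u : nat -> K,
    (forall e : R, 0 < e -> exists N, forall m n, (N <= m)%N -> (N <= n)%N ->
        abs (u m - u n) < e) ->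
    exists L, forall e : R, 0 < e -> exists N, forall n, (N <= n)%N ->
        abs (u n - L) < e
}.

Definition cvg_abs (K : fieldType) (R : realType) (abs : K -> R)
  (u : nat -> K) (L : K) : Prop :=
  forall e : R, 0 < e -> exists N, forall n, (N <= n)%N -> abs (u n - L) < e.

(* the limit (chosen by classical choice; it is unique when it exists) *)
Definition lim_abs (K : fieldType) (R : realType) (abs : K -> R)
  (u : nat -> K) : K :=
  epsilon (inhabits 0) (cvg_abs abs u).

Definition qnum (K : fieldType) (q : K) (x : nat) : K :=
  if q == 1 then x%:R else (1 - q ^+ x) / (1 - q).

(* fermionic p-adic q-integral of f (evaluated on integers xi) :
   lim_N 1/[p^N]_{-q} * sum_{xi=0}^{p^N-1} f(xi) (-q)^xi,
   with [p^N]_{-q} = (1 + q^{p^N})/(1+q) *)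
Definition fqint (K : fieldType) (R : realType) (abs : K -> R) (p : nat)
  (q : K) (f : nat -> K) : K :=
  lim_abs abs (fun N => (\sum_(xi < p ^ N) f xi * (- q) ^+ xi)
                          / ((1 + q ^+ (p ^ N)) / (1 + q))).

(* (h,q)-Genocchi numbers with weight alpha:
   G_{m,q}^{(alpha,h)} = m * int q^{(h-1)xi} [xi]_{q^alpha}^{m-1} dmu_{-q}(xi)
   (defined for m >= 1 by the paper; value at m = 0 is irrelevant, here 0). *)
Definition Gtilde (K : fieldType) (R : realType) (abs : K -> R) (p : nat)
  (q : K) (alpha h : nat) (m : nat) : K :=
  m%:R * fqint abs p q
    (fun xi => q ^+ ((h - 1) * xi) * qnum (q ^+ alpha) xi ^+ m.-1).

(* Main.v *)
From HB Require Import structures.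
From mathcomp Require Import all_boot all_order all_algebra.
From mathcomp Require Import reals.
From mathcomp Require Import ring lra zify.
From Stdlib Require Import ClassicalEpsilon FunctionalExtensionality.
Require Import Defs.
Import Order.TTheory GRing.Theory Num.Theory.
Local Open Scope ring_scope.
Set Implicit Arguments. Unset Strict Implicit. Unset Printing Implicit Defensive.

Section Work.
Variables (K : closedFieldType) (R : realType) (p : nat) (abs : K -> R).
Hypothesis HK : padic_abs p abs.
Hypothesis Hp : prime p.
Hypothesis Hodd : odd p.

Lemma a_ge0 x : 0 <= abs x. Proof. have := pabs_ge0 HK x. exact. Qed.
Lemma a0 : abs 0 = 0. Proof. by have [_ ->] := pabs_eq0 HK 0. Qed.
Lemma a_eq0 x : (abs x = 0) -> x = 0. Proof. by have [h _] := pabs_eq0 HK x. Qed.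
Lemma aM x y : abs (x * y) = abs x * abs y. Proof. by have := pabs_mul HK x y. Qed.
Lemma aU x y : abs (x + y) <= Num.max (abs x) (abs y). Proof. by have := pabs_ultra HK x y. Qed.

Lemma a1 : abs 1 = 1.
Proof.
have h := aM 1 1; rewrite mulr1 in h.
have hn : abs 1 != 0 by apply/eqP => /a_eq0/eqP; rewrite oner_eq0.
by apply/eqP; rewrite -(inj_eq (mulfI hn)) mulr1 -h.
Qed.

Lemma aN1 : abs (-1) = 1.
Proof.
have h := aM (-1) (-1); rewrite mulrNN mulr1 a1 in h.
have h0 := a_ge0 (-1).
have : (abs (-1) - 1) * (abs (-1) + 1) = 0 by rewrite -subr_sqr_1 expr2 -h subrr.
move/eqP; rewrite mulf_eq0 => /orP[/eqP|/eqP]; first by move/subr0_eq.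
move=> e; have : abs (-1) + 1 > 0 by rewrite ltr_wpDl. by rewrite e ltxx.
Qed.

Lemma aN x : abs (- x) = abs x.
Proof. by rewrite -mulN1r aM aN1 mul1r. Qed.

Lemma aBC x y : abs (x - y) = abs (y - x).
Proof. by rewrite -aN opprB. Qed.

Lemma aX x n : abs (x ^+ n) = abs x ^+ n.
Proof. elim: n => [|n IH]; by rewrite ?expr0 ?a1 // !exprS aM IH. Qed.

Lemma aV x : abs (x^-1) = (abs x)^-1.
Proof.
have [->|xn0] := eqVneq x 0; first by rewrite invr0 a0 invr0.
have h := aM x x^-1; rewrite mulfV // a1 in h.
have ha : abs x != 0 by apply/eqP => /a_eq0/eqP; rewrite (negbTE xn0).
by apply: (mulfI ha); rewrite -h mulfV.
Qed.

Lemma aD_le x y c : abs x <= c -> abs y <= c -> abs (x + y) <= c.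
Proof. move=> hx hy; apply: le_trans (aU x y) _; by rewrite ge_max hx hy. Qed.

Lemma aD_lt x y c : abs x < c -> abs y < c -> abs (x + y) < c.
Proof. move=> hx hy; apply: le_lt_trans (aU x y) _; by rewrite gt_max hx hy. Qed.

Lemma aB_le x y c : abs x <= c -> abs y <= c -> abs (x - y) <= c.
Proof. by move=> hx hy; apply: aD_le; rewrite ?aN. Qed.

Lemma aB_lt x y c : abs x < c -> abs y < c -> abs (x - y) < c.
Proof. by move=> hx hy; apply: aD_lt; rewrite ?aN. Qed.

Lemma a_sum_le (I : Type) (r : seq I) (P : pred I) (F : I -> K) c :
  0 <= c -> (forall i, P i -> abs (F i) <= c) -> abs (\sum_(i <- r | P i) F i) <= c.
Proof.
move=> c0 h; elim/big_ind: _ => //; first by rewrite a0.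
by move=> x y; apply: aD_le.
Qed.

Lemma a_nat n : abs (n%:R) <= 1.
Proof.
elim: n => [|n IH]; first by rewrite a0.
by rewrite -addn1 natrD; apply: aD_le; rewrite // a1.
Qed.

Lemma a_p : abs (p%:R) = (p%:R)^-1. Proof. by have := pabs_p HK. Qed.

Lemma p_gt1 : (1 < p)%N. Proof. exact: prime_gt1. Qed.

Lemma a_p_lt1 : abs (p%:R) < 1.
Proof.
rewrite a_p invf_lt1; first by rewrite ltr1n p_gt1.
by rewrite ltr0n ltnW // p_gt1.
Qed.

Lemma a2 : abs 2 = 1.
Proof.
apply/eqP; rewrite eq_le; apply/andP; split; first exact: a_nat 2.
have [m hm] : exists m, p = (2 * m).+1.
  exists p./2; rewrite -{1}(odd_double_half p) Hodd -mul2n. by [].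
have e : (1 : K) = p%:R - 2 * m%:R by rewrite hm -addn1 natrD natrM addrC addKr.
have := aU (p%:R) (- (2 * m%:R)); rewrite -e a1 aN aM.
have hm1 : abs 2 * abs m%:R <= abs 2.
  rewrite -[X in _ <= X]mulr1; apply: ler_wpM2l; [exact: a_ge0| exact: a_nat].
rewrite le_max => /orP[h|h]; last exact: le_trans h hm1.
by move: (lt_le_trans a_p_lt1 h); rewrite ltxx.
Qed.

Lemma char0 n : (0 < n)%N -> (n%:R : K) != 0. Proof. move=> h; by have := pchar0 HK h. Qed.

Definition U (t : K) := abs (t - 1) < 1.

Lemma U_abs t : U t -> abs t = 1.
Proof.
move=> h; apply/eqP; rewrite eq_le; apply/andP; split.
  by rewrite -[t](subrK 1); apply: aD_le; rewrite ?a1 // ltW.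
have := aU (1 - t) t; rewrite subrK a1 le_max => /orP[h'|//].
by move: (lt_le_trans h h'); rewrite aBC ltxx.
Qed.

Lemma U_ne0 t : U t -> t != 0.
Proof. by move=> /U_abs h; apply/eqP => e; move: h; rewrite e a0 => /eqP; rewrite eq_sym oner_eq0. Qed.

Lemma U1 : U 1. Proof. by rewrite /U subrr a0 ltr01. Qed.

Lemma U_mul t u : U t -> U u -> U (t * u).
Proof.
move=> ht hu; rewrite /U.
have -> : t * u - 1 = t * (u - 1) + (t - 1) by rewrite mulrBr mulr1 addrA subrK.
by apply: aD_lt => //; rewrite aM U_abs // mul1r.
Qed.

Lemma U_inv t : U t -> U t^-1.
Proof.
move=> ht; rewrite /U.
have -> : t^-1 - 1 = t^-1 * (1 - t) by rewrite mulrBr mulr1 mulVf ?U_ne0.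
by rewrite aM aV U_abs // invr1 mul1r aBC.
Qed.

Lemma U_exp t n : U t -> U (t ^+ n).
Proof. move=> ht; elim: n => [|n IH]; by rewrite ?expr0 ?U1 // exprS U_mul. Qed.

Lemma U_1p t : U t -> 1 + t != 0.
Proof.
move=> ht; apply/eqP => e.
have et : t = -1 by rewrite -(addKr 1 t) e addr0.
by move: ht; rewrite /U et -opprD aN a2 ltxx.
Qed.

Lemma two_ne0 : (2 : K) != 0. Proof. by have := @char0 2 isT. Qed.


Notation cvg := (cvg_abs abs).

Lemma cvg_cst c : cvg (fun _ => c) c.
Proof. by move=> e e0; exists 0%N => n _; rewrite subrr a0. Qed.

Lemma cvg_ext u v L : (forall N, u N = v N) -> cvg u L -> cvg v L.
Proof. move=> h c e e0; have [N hN] := c e e0; exists N => n hn; rewrite -h; exact: hN. Qed.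

Lemma cvg_add u v L M : cvg u L -> cvg v M -> cvg (fun N => u N + v N) (L + M).
Proof.
move=> cu cv e e0; have [N1 h1] := cu e e0; have [N2 h2] := cv e e0.
exists (maxn N1 N2) => n hn.
rewrite opprD addrACA; apply: aD_lt; [apply: h1|apply: h2]; apply: leq_trans hn;
  by rewrite ?leq_maxl ?leq_maxr.
Qed.

Lemma cvg_opp u L : cvg u L -> cvg (fun N => - u N) (- L).
Proof. move=> cu e e0; have [N h] := cu e e0; exists N => n hn; by rewrite -opprD aN h. Qed.

Lemma cvg_sub u v L M : cvg u L -> cvg v M -> cvg (fun N => u N - v N) (L - M).
Proof. by move=> cu cv; apply: cvg_add => //; apply: cvg_opp. Qed.

Lemma cvg_mul u v L M : cvg u L -> cvg v M -> cvg (fun N => u N * v N) (L * M).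
Proof.
move=> cu cv e e0.
set d := 1 + abs L + abs M.
have d1 : 1 <= d by rewrite /d -addrA lerDl addr_ge0 ?a_ge0.
set dl := e / (d + e).
have dpos : 0 < d + e by lra.
have dl0 : 0 < dl by rewrite divr_gt0.
have dle : dl * (d + e) = e by rewrite /dl mulfVK // gt_eqF.
have [N1 h1] := cu dl dl0; have [N2 h2] := cv dl dl0.
exists (maxn N1 N2) => n hn.
have hu := h1 n (leq_trans (leq_maxl _ _) hn); have hv := h2 n (leq_trans (leq_maxr _ _) hn).
have -> : u n * v n - L * M = (u n - L) * (v n - M) + (L * (v n - M) + (u n - L) * M).
  by ring.
have g1 := a_ge0 (u n - L); have g2 := a_ge0 (v n - M); have gL := a_ge0 L; have gM := a_ge0 M.
have hLd : abs L <= d by rewrite /d; lra.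
have hMd : abs M <= d by rewrite /d; lra.
apply: aD_lt; first by rewrite aM; nra.
by apply: aD_lt; rewrite aM; nra.
Qed.

Lemma cvg_pow u L n : cvg u L -> cvg (fun N => u N ^+ n) (L ^+ n).
Proof.
move=> cu; elim: n => [|n IH]; first by apply: (cvg_ext _ (cvg_cst 1)) => N; rewrite expr0.
by rewrite exprSr; apply: (cvg_ext _ (cvg_mul IH cu)) => N; rewrite exprSr.
Qed.

Lemma a_close u L : abs (u - L) < abs L -> abs u = abs L.
Proof.
move=> h; apply/eqP; rewrite eq_le; apply/andP; split.
  by rewrite -[u](subrK L); apply: aD_le; [exact: ltW|exact: lexx].
have := aU (L - u) u; rewrite subrK le_max => /orP[h'|//].
by move: (lt_le_trans h h'); rewrite aBC ltxx.
Qed.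

Lemma cvg_inv u L : L != 0 -> cvg u L -> cvg (fun N => (u N)^-1) L^-1.
Proof.
move=> L0 cu e e0.
have aL0 : 0 < abs L by rewrite lt_def a_ge0 andbT; apply/eqP => /a_eq0 /eqP; rewrite (negbTE L0).
have [N1 h1] := cu _ aL0.
have e2 : 0 < e * abs L ^+ 2 by rewrite mulr_gt0 // exprn_gt0.
have [N2 h2] := cu _ e2.
exists (maxn N1 N2) => n hn.
have hu := h1 n (leq_trans (leq_maxl _ _) hn); have hv := h2 n (leq_trans (leq_maxr _ _) hn).
have au := a_close hu.
have u0 : u n != 0 by apply/eqP => e'; move: au; rewrite e' a0 => /esym/eqP; rewrite (gt_eqF aL0).
have -> : (u n)^-1 - L^-1 = (L - u n) * ((u n)^-1 * L^-1) by field; rewrite u0 L0.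
rewrite aM aM !aV au aBC -expr2 exprVn.
by rewrite ltr_pdivrMr // exprn_gt0.
Qed.

Lemma cvg_unique u L M : cvg u L -> cvg u M -> L = M.
Proof.
move=> cL cM; apply/eqP; apply/negPn/negP => ne.
have e0 : 0 < abs (L - M) by rewrite lt_def a_ge0 andbT; apply/eqP => /a_eq0/eqP; rewrite subr_eq0 (negbTE ne).
have [N1 h1] := cL _ e0; have [N2 h2] := cM _ e0.
have hu := h1 (maxn N1 N2) (leq_maxl _ _); have hv := h2 (maxn N1 N2) (leq_maxr _ _).
have : abs (L - M) < abs (L - M).
  rewrite {1}(_ : L - M = (u (maxn N1 N2) - M) - (u (maxn N1 N2) - L)); last by ring.
  exact: (aB_lt hv hu).
by rewrite ltxx.
Qed.

Lemma lim_eq u L : cvg u L -> lim_abs abs u = L.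
Proof.
move=> h; rewrite /lim_abs.
have := epsilon_spec (inhabits 0) (cvg u) (ex_intro _ L h).
by move=> h'; apply: cvg_unique h' h.
Qed.

Lemma cvg_sum n (u : 'I_n -> nat -> K) (L : 'I_n -> K) :
  (forall i, cvg (u i) (L i)) -> cvg (fun N => \sum_(i < n) u i N) (\sum_(i < n) L i).
Proof.
elim: n u L => [|n IH] u L h.
  by rewrite big_ord0; apply: (cvg_ext _ (cvg_cst 0)) => N; rewrite !big_ord0.
rewrite big_ord_recr /=.
apply: (cvg_ext _ (cvg_add (IH (fun i => u (widen_ord (leqnSn n) i)) _ (fun i => h _)) (h ord_max))).
by move=> N; rewrite big_ord_recr.
Qed.

Lemma bernoulli (d : R) n : 0 <= d -> 1 + n%:R * d <= (1 + d) ^+ n.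
Proof.
move=> d0; elim: n => [|n IH]; first by rewrite mul0r addr0 expr0.
rewrite exprS -addn1 natrD mulrDl mul1r.
have h : 0 <= n%:R * d by rewrite mulr_ge0 ?ler0n.
nra.
Qed.

Lemma geom_small (c e : R) : 0 <= c -> c < 1 -> 0 < e -> exists N, c ^+ N < e.
Proof.
move=> c0 c1 e0.
have [->|cn0] := eqVneq c 0; first by exists 1%N; rewrite expr1.
have cp : 0 < c by rewrite lt_def cn0.
set d := c^-1 - 1.
have ci : 1 < c^-1 by rewrite invf_gt1.
have dp : 0 < d by rewrite subr_gt0.
have ed : 0 < e * d by rewrite mulr_gt0.
set N := Num.bound ((e * d)^-1).
exists N.
have hN : (e * d)^-1 < N%:R by apply: archi_boundP; rewrite invr_ge0 ltW.
have hN' : 1 < N%:R * (e * d).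
  have edn : e * d != 0 by rewrite gt_eqF.
  have h1 := mulVf edn; nra.
have hb := bernoulli N (ltW dp).
have e1 : 1 + d = c^-1 by rewrite /d addrC subrK.
rewrite e1 exprVn in hb.
set X := c ^+ N in hb *.
have X0 : 0 < X by rewrite exprn_gt0.
have XX : X * X^-1 = 1 by rewrite mulfV // gt_eqF.
have Xi0 : 0 < X^-1 by rewrite invr_gt0.
have hN0 : 0 <= N%:R :> R by rewrite ler0n.
nra.
Qed.

Lemma cvg0_geom (u : nat -> K) (C c : R) : 0 <= c -> c < 1 ->
  (forall N, abs (u N) <= C * c ^+ N) -> cvg u 0.
Proof.
move=> c0 c1 h e e0.
have C1 : 0 < `|C| + 1 by rewrite ltr_pwDr ?normr_ge0.
have [N hN] := geom_small c0 c1 (divr_gt0 e0 C1).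
exists N => n hn; rewrite subr0.
apply: le_lt_trans (h n) _.
have hcn : c ^+ n <= c ^+ N by rewrite ler_wiXn2l // ltW.
have hcn0 : 0 <= c ^+ n by rewrite exprn_ge0.
have hC : C <= `|C| by rewrite ler_norm.
have hC0 : 0 <= `|C| by rewrite normr_ge0.
have : (`|C| + 1) * (e / (`|C| + 1)) = e by rewrite mulrC mulfVK // gt_eqF.
nra.
Qed.

Lemma lerX (a b : R) n : 0 <= a -> a <= b -> a ^+ n <= b ^+ n.
Proof.
move=> a0 ab; elim: n => [|n IH]; first by rewrite !expr0.
by rewrite !exprS ler_pM // exprn_ge0.
Qed.

Lemma qnum_sum (Q : K) x : qnum Q x = \sum_(i < x) Q ^+ i.
Proof.
rewrite /qnum; case: eqP => [->|/eqP Q1].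
  by under eq_bigr do rewrite expr1n; rewrite sumr_const card_ord.
have Q1' : 1 - Q != 0 by rewrite subr_eq0 eq_sym.
apply: (mulIf Q1'); rewrite mulfVK // mulrC.
have := subrX1 Q x; move=> e; rewrite -[1 - Q ^+ x]opprB e; ring.
Qed.

Lemma qnum0 (Q : K) : qnum Q 0 = 0.
Proof. by rewrite qnum_sum big_ord0. Qed.

Lemma qnumS (Q : K) x : qnum Q x.+1 = 1 + Q * qnum Q x.
Proof.
rewrite !qnum_sum big_ord_recl expr0 mulr_sumr; congr (_ + _).
by apply: eq_bigr => i _; rewrite exprS.
Qed.

Lemma subX1 (Q : K) x : Q ^+ x - 1 = (Q - 1) * qnum Q x.
Proof. by rewrite qnum_sum subrX1. Qed.

Lemma a_qnum_le1 (t : K) x : U t -> abs (qnum t x) <= 1.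
Proof.
move=> ht; rewrite qnum_sum; apply: a_sum_le => // i _.
by rewrite aX U_abs // expr1n.
Qed.

Definition cU (Q : K) := Num.max (abs (p%:R : K)) (abs (Q - 1)).

Lemma cU_ge0 (Q : K) : 0 <= cU Q.
Proof. by rewrite /cU le_max a_ge0. Qed.

Lemma cU_lt1 (Q : K) : U Q -> cU Q < 1.
Proof. by move=> h; rewrite /cU gt_max a_p_lt1; exact: h. Qed.

Lemma a_qnum_p (t : K) : U t -> abs (qnum t p) <= cU t.
Proof.
move=> ht.
have -> : qnum t p = p%:R + \sum_(i < p) (t ^+ i - 1).
  rewrite qnum_sum sumrB sumr_const card_ord addrC subrK //.
apply: aD_le; first by rewrite /cU le_max lexx.
apply: a_sum_le; first exact: cU_ge0.
move=> i _; rewrite subX1 aM.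
apply: le_trans (_ : abs (t - 1) * 1 <= _).
  by apply: ler_wpM2l; [exact: a_ge0|exact: a_qnum_le1].
by rewrite mulr1 /cU le_max lexx orbT.
Qed.

Lemma powp_bound (Q : K) N : U Q -> abs (Q ^+ (p ^ N) - 1) <= cU Q ^+ N * abs (Q - 1).
Proof.
move=> hQ; elim: N => [|N IH]; first by rewrite expn0 expr1 expr0 mul1r.
rewrite expnSr exprM subX1 aM.
set t := Q ^+ (p ^ N) in IH *.
have cN : cU Q ^+ N <= 1 by rewrite exprn_ile1 ?cU_ge0 // ltW // cU_lt1.
have hd : abs (t - 1) <= abs (Q - 1).
  apply: le_trans IH _; rewrite -[X in _ <= X]mul1r; apply: ler_wpM2r => //; exact: a_ge0.
have ht : U t by apply: le_lt_trans hd hQ.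
have hc : abs (qnum t p) <= cU Q.
  apply: le_trans (a_qnum_p ht) _; rewrite /cU ge_max le_max lexx /= le_max hd orbT //.
rewrite exprSr.
have g1 := a_ge0 (t - 1); have g2 := a_ge0 (qnum t p); have g3 := cU_ge0 Q.
have g4 : 0 <= cU Q ^+ N by rewrite exprn_ge0.
have g5 := a_ge0 (Q - 1).
nra.
Qed.

Lemma qnum_pN (Q : K) N : U Q -> abs (qnum Q (p ^ N)) <= cU Q ^+ N.
Proof.
move=> hQ; have [->|Q1] := eqVneq Q 1.
  rewrite /qnum eqxx natrX aX; apply: lerX; first exact: a_ge0.
  by rewrite /cU le_max lexx.
have hQ1 : 0 < abs (Q - 1).
  by rewrite lt_def a_ge0 andbT; apply/eqP => /a_eq0/eqP; rewrite subr_eq0 (negbTE Q1).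
have := powp_bound N hQ; rewrite subX1 aM mulrC ler_pM2r //.
Qed.

Lemma cvg_powp (Q : K) : U Q -> cvg (fun N => Q ^+ (p ^ N)) 1.
Proof.
move=> hQ.
have h : cvg (fun N => Q ^+ (p ^ N) - 1) 0.
  apply: (cvg0_geom (C := abs (Q - 1)) (cU_ge0 Q) (cU_lt1 hQ)) => N.
  by rewrite mulrC; apply: powp_bound.
have := cvg_add h (cvg_cst 1); rewrite add0r.
by apply: cvg_ext => N; rewrite subrK.
Qed.

Lemma cvg_qnum (Q : K) : U Q -> cvg (fun N => qnum Q (p ^ N)) 0.
Proof.
move=> hQ; apply: (cvg0_geom (C := 1) (cU_ge0 Q) (cU_lt1 hQ)) => N.
by rewrite mul1r; apply: qnum_pN.
Qed.

Lemma cvg_horner (P : {poly K}) u x : cvg u x -> cvg (fun N => P.[u N]) P.[x].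
Proof.
move=> cu; rewrite horner_coef.
have := @cvg_sum (size P) (fun (i : 'I_(size P)) (N : nat) => P`_i * u N ^+ i) (fun i => P`_i * x ^+ i)
  (fun i => cvg_mul (cvg_cst _) (cvg_pow i cu)).
by apply: cvg_ext => N; rewrite horner_coef.
Qed.

Lemma cvg_eqL u L L' : cvg u L -> L = L' -> cvg u L'.
Proof. by move=> h <-. Qed.

Lemma cvg_lim u : (exists L, cvg u L) -> cvg u (lim_abs abs u).
Proof. by move=> [L h]; rewrite (lim_eq h). Qed.

Definition Ifin (r : K) (g : nat -> K) (N : nat) : K :=
  (\sum_(xi < p ^ N) g xi * (- r) ^+ xi) / ((1 + r ^+ (p ^ N)%N) / (1 + r)).

Lemma Ifin_ext r g g' N : (forall x, g x = g' x) -> Ifin r g N = Ifin r g' N.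
Proof. by move=> h; rewrite /Ifin; under eq_bigr do rewrite h. Qed.

Lemma Ifin_sum r n (c : 'I_n -> K) (f : 'I_n -> nat -> K) N :
  Ifin r (fun x => \sum_(i < n) c i * f i x) N = \sum_(i < n) c i * Ifin r (f i) N.
Proof.
rewrite /Ifin.
under eq_bigr do rewrite mulr_suml.
rewrite exchange_big /= mulr_suml; apply: eq_bigr => i _.
rewrite mulrA mulr_sumr !mulr_suml; apply: eq_bigr => x _; ring.
Qed.

Lemma Ifin_lin r a g g' N :
  Ifin r (fun x => a * g x + g' x) N = a * Ifin r g N + Ifin r g' N.
Proof.
rewrite /Ifin mulrA -mulrDl; congr (_ * _).
under eq_bigr do rewrite mulrDl.
by rewrite big_split /= mulr_sumr; congr (_ + _); apply: eq_bigr => x _; rewrite mulrA.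
Qed.

Lemma Ifin_shift r g N :
  r * Ifin r (fun x => g x.+1) N + Ifin r g N
  = (g 0%N + r ^+ (p ^ N)%N * g (p ^ N)%N) / ((1 + r ^+ (p ^ N)%N) / (1 + r)).
Proof.
rewrite /Ifin mulrA -mulrDl; congr (_ * _).
set M := (p ^ N)%N.
have oM : odd M by rewrite /M oddX Hodd orbT.
have e1 : \sum_(i < M.+1) g i * (- r) ^+ i = g 0%N + \sum_(i < M) g i.+1 * (- r) ^+ i.+1.
  by rewrite big_ord_recl expr0 mulr1.
have e1' : \sum_(i < M.+1) g i * (- r) ^+ i = \sum_(i < M) g i * (- r) ^+ i + g M * (- r) ^+ M.
  by rewrite big_ord_recr.
have eM : (- r) ^+ M = - r ^+ M by rewrite exprNn -signr_odd oM expr1 mulN1r.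
have e2 : \sum_(i < M) g i.+1 * (- r) ^+ i.+1 = - r * \sum_(i < M) g i.+1 * (- r) ^+ i.
  by rewrite mulr_sumr; apply: eq_bigr => i _; rewrite exprS mulrCA.
rewrite e1 e2 eM in e1'.
have : r * (\sum_(i < M) g i.+1 * (- r) ^+ i) = g 0%N - (\sum_(i < M) g i * (- r) ^+ i + g M * - r ^+ M).
  by rewrite -e1'; ring.
move=> ->; ring.
Qed.

Lemma cvg_shiftRHS r g : U r -> cvg (fun N => g (p ^ N)%N) (g 0%N) ->
  cvg (fun N => (g 0%N + r ^+ (p ^ N)%N * g (p ^ N)%N) / ((1 + r ^+ (p ^ N)%N) / (1 + r)))
      ((1 + r) * g 0%N).
Proof.
move=> hr cg.
have c1 := cvg_add (cvg_cst (g 0%N)) (cvg_mul (cvg_powp hr) cg).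
have c2 := cvg_mul (cvg_add (cvg_cst 1) (cvg_powp hr)) (cvg_cst (1 + r)^-1).
have r1 := U_1p hr.
have nz : (1 + 1) * (1 + r)^-1 != 0 by rewrite mulf_neq0 ?invr_eq0 // two_ne0.
have c3 := cvg_inv nz c2.
apply: cvg_eqL (cvg_mul c1 c3) _.
have t2 := two_ne0; field; by rewrite r1 t2.
Qed.

Section Fermi.
Variables (r s Q : K).
Hypotheses (hr : U r) (hs : U s) (hQ : U Q).

Definition fP (P : {poly K}) : nat -> K := fun x => s ^+ x * P.[qnum Q x].

Lemma fP_pN P : cvg (fun N => fP P (p ^ N)%N) (fP P 0%N).
Proof.
rewrite /fP expr0 mul1r qnum0.
apply: cvg_eqL (cvg_mul (cvg_powp hs) (cvg_horner P (cvg_qnum hQ))) _.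
by rewrite mul1r.
Qed.

Lemma fP_shift P x : fP (s *: (P \Po (Q *: 'X + 1))) x = fP P x.+1.
Proof.
rewrite /fP hornerZ horner_comp hornerD hornerZ hornerX hornerC qnumS exprS.
by rewrite [1 + _]addrC; ring.
Qed.

Lemma fP_coef P x : fP P x = \sum_(i < size P) P`_i * fP 'X^i x.
Proof.
rewrite /fP horner_coef mulr_sumr; apply: eq_bigr => i _.
by rewrite hornerXn mulrCA.
Qed.

Lemma ex_Xj j : exists L, cvg (Ifin r (fP 'X^j)) L.
Proof.
elim/ltn_ind: j => j IH.
pose c (i : 'I_j.+1) : K := s * (Q ^+ i * 'C(j, i)%:R).
have sh : forall x, fP 'X^j x.+1 = \sum_(i < j.+1) c i * fP 'X^i x.
  move=> x; rewrite /fP hornerXn qnumS addrC exprD1n exprS -mulrA !mulr_sumr.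
  apply: eq_bigr => i _; rewrite hornerXn /c exprMn -mulr_natr; ring.
have key : forall N, Ifin r (fP 'X^j) N
   = ((fP 'X^j 0%N + r ^+ (p ^ N)%N * fP 'X^j (p ^ N)%N) / ((1 + r ^+ (p ^ N)%N) / (1 + r))
      - r * \sum_(i < j) c (widen_ord (leqnSn j) i) * Ifin r (fP 'X^i) N) / (1 + r * s * Q ^+ j).
  move=> N.
  have e := Ifin_shift r (fP 'X^j) N.
  rewrite (Ifin_ext _ _ sh) Ifin_sum big_ord_recr /= in e.
  have cj : c ord_max = s * Q ^+ j by rewrite /c /= binn mulr1.
  rewrite cj in e.
  have nz : 1 + r * s * Q ^+ j != 0 by apply: U_1p; rewrite !U_mul // U_exp.
  rewrite -e; field; exact: nz.
exists ((((1 + r) * fP 'X^j 0%N) - r * \sum_(i < j) c (widen_ord (leqnSn j) i) *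
         lim_abs abs (Ifin r (fP 'X^i))) / (1 + r * s * Q ^+ j)).
apply: (cvg_ext (fun N => esym (key N))).
apply: cvg_mul (cvg_cst _).
apply: cvg_sub (cvg_shiftRHS hr (fP_pN _)) _.
apply: cvg_mul (cvg_cst _) _.
apply: (@cvg_sum j (fun i N => c (widen_ord (leqnSn j) i) * Ifin r (fP 'X^i) N)).
move=> i; apply: cvg_mul (cvg_cst _) _; apply: cvg_lim; exact: IH.
Qed.

Definition Lfun (P : {poly K}) := fqint abs p r (fP P).

Lemma Lfun_cvg P : cvg (Ifin r (fP P)) (Lfun P).
Proof.
apply: cvg_lim.
exists (\sum_(i < size P) P`_i * lim_abs abs (Ifin r (fP 'X^i))).
apply: (cvg_ext (fun N => esym (Ifin_ext r N (fP_coef P)))).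
apply: (cvg_ext (fun N => esym (Ifin_sum r (fun i : 'I_(size P) => P`_i) (fun i => fP 'X^i) N))).
apply: (@cvg_sum (size P) (fun i N => P`_i * Ifin r (fP 'X^i) N)) => i.
by apply: cvg_mul (cvg_cst _) _; apply: cvg_lim; exact: ex_Xj.
Qed.

Lemma Lfun_ext P P' : (forall x, P.[x] = P'.[x]) -> Lfun P = Lfun P'.
Proof.
move=> h; apply: esym; apply: lim_eq.
apply: (cvg_ext _ (Lfun_cvg P)) => N; apply: Ifin_ext => x; by rewrite /fP h.
Qed.

Lemma Lfun_lin a P P' : Lfun (a *: P + P') = a * Lfun P + Lfun P'.
Proof.
apply: lim_eq.
apply: (cvg_ext _ (cvg_add (cvg_mul (cvg_cst a) (Lfun_cvg P)) (Lfun_cvg P'))) => N.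
rewrite -Ifin_lin; apply: Ifin_ext => x; rewrite /fP hornerD hornerZ; ring.
Qed.

Lemma Lfun_shift P : r * Lfun (s *: (P \Po (Q *: 'X + 1))) + Lfun P = (1 + r) * P.[0].
Proof.
have c1 := cvg_add (cvg_mul (cvg_cst r) (Lfun_cvg (s *: (P \Po (Q *: 'X + 1))))) (Lfun_cvg P).
have c2 := cvg_shiftRHS hr (fP_pN P).
have e : fP P 0%N = P.[0] by rewrite /fP expr0 mul1r qnum0.
rewrite -e; apply: (cvg_unique c1); apply: (cvg_ext _ c2) => N.
rewrite -Ifin_shift; congr (_ + _); congr (_ * _); apply: Ifin_ext => x; by rewrite fP_shift.
Qed.

End Fermi.

Section Lin.
Variable F : {poly K} -> K.
Hypothesis Flin : forall a P P', F (a *: P + P') = a * F P + F P'.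
Hypothesis Fext : forall P P', (forall x, P.[x] = P'.[x]) -> F P = F P'.

Lemma F0 : F 0 = 0.
Proof.
have := Flin 1 0 0; rewrite scale1r addr0 mul1r => e.
by apply/eqP; rewrite -(subrr (F 0)) {2}e addrK.
Qed.

Lemma FZ a P : F (a *: P) = a * F P.
Proof. by have := Flin a P 0; rewrite !addr0 F0 addr0. Qed.

Lemma F_sum n (c : 'I_n -> K) (Ps : 'I_n -> {poly K}) :
  F (\sum_(i < n) c i *: Ps i) = \sum_(i < n) c i * F (Ps i).
Proof.
elim: n c Ps => [|n IH] c Ps; first by rewrite !big_ord0 F0.
rewrite !big_ord_recr /= addrC Flin IH addrC //.
Qed.

Lemma F_comb n (c : 'I_n -> K) (Ps : 'I_n -> {poly K}) P :
  (forall x, P.[x] = \sum_(i < n) c i * (Ps i).[x]) -> F P = \sum_(i < n) c i * F (Ps i).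
Proof.
move=> h; rewrite -F_sum; apply: Fext => x.
by rewrite h horner_sum; apply: eq_bigr => i _; rewrite hornerZ.
Qed.

Variables (r s Q : K).
Hypothesis Fshift : forall P, r * F (s *: (P \Po (Q *: 'X + 1))) + F P = 0.
Hypothesis nz : forall j, 1 + r * s * Q ^+ j != 0.

Lemma F_Xj j : F 'X^j = 0.
Proof.
elim/ltn_ind: j => j IH.
have e := Fshift 'X^j.
pose c (i : 'I_j.+1) : K := s * (Q ^+ i * 'C(j, i)%:R).
have e2 : F (s *: ('X^j \Po (Q *: 'X + 1))) = \sum_(i < j.+1) c i * F 'X^i.
  apply: F_comb => x.
  rewrite hornerZ horner_comp hornerXn hornerD hornerZ hornerX hornerC exprD1n mulr_sumr.
  apply: eq_bigr => i _; rewrite hornerXn /c exprMn -mulr_natr; ring.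
rewrite e2 big_ord_recr /= big1 ?add0r in e; last first.
  by move=> i _; rewrite IH ?mulr0 //=.
have : (1 + r * s * Q ^+ j) * F 'X^j = 0.
  by rewrite -e /c /= binn mulr1; ring.
by move/eqP; rewrite mulf_eq0 (negbTE (nz j)) /= => /eqP.
Qed.

Lemma F_zero P : F P = 0.
Proof.
rewrite (@F_comb (size P) (fun i => P`_i) (fun i => 'X^i) P).
  by apply: big1 => i _; rewrite F_Xj mulr0.
by move=> x; rewrite horner_coef; apply: eq_bigr => i _; rewrite hornerXn.
Qed.

End Lin.

Section Main.
Variables (q : K) (alpha h : nat).
Hypothesis Hq : U q.
Hypothesis Hh : (0 < h)%N.

Let s := q ^+ (h - 1).
Let Q := q ^+ alpha.
Let s' := q^-1 ^+ (h - 1).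
Let Q' := q^-1 ^+ alpha.
Let hs : U s. Proof. exact: U_exp. Qed.
Let hQ : U Q. Proof. exact: U_exp. Qed.
Let hqi : U q^-1. Proof. exact: U_inv. Qed.
Let hs' : U s'. Proof. exact: U_exp. Qed.
Let hQ' : U Q'. Proof. exact: U_exp. Qed.
Let es : s' = s^-1. Proof. by rewrite /s' /s exprVn. Qed.
Let eQ : Q' = Q^-1. Proof. by rewrite /Q' /Q exprVn. Qed.
Let q0 : q != 0. Proof. exact: U_ne0. Qed.
Let s0 : s != 0. Proof. exact: U_ne0. Qed.
Let Q0 : Q != 0. Proof. exact: U_ne0. Qed.

Let L := Lfun q s Q.
Let L' := Lfun q^-1 s' Q'.

Let Llin : forall a P P', L (a *: P + P') = a * L P + L P'.
Proof. exact: Lfun_lin. Qed.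
Let L'lin : forall a P P', L' (a *: P + P') = a * L' P + L' P'.
Proof. exact: Lfun_lin. Qed.
Let Lext : forall P P', (forall x, P.[x] = P'.[x]) -> L P = L P'.
Proof. exact: Lfun_ext. Qed.
Let L'ext : forall P P', (forall x, P.[x] = P'.[x]) -> L' P = L' P'.
Proof. exact: Lfun_ext. Qed.
Let Lsh : forall P, q * L (s *: (P \Po (Q *: 'X + 1))) + L P = (1 + q) * P.[0].
Proof. exact: Lfun_shift. Qed.
Let L'sh : forall P, q^-1 * L' (s' *: (P \Po (Q' *: 'X + 1))) + L' P = (1 + q^-1) * P.[0].
Proof. exact: Lfun_shift. Qed.

Let Lam (P : {poly K}) := (1 + q) * P.[0] - q * L' (P \Po (- Q' *: 'X)).

Lemma L_Lam P : L P = Lam P.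
Proof.
apply/eqP; rewrite -subr_eq0; apply/eqP.
pose D P := L P - Lam P.
have Dlin : forall a P P', D (a *: P + P') = a * D P + D P'.
  move=> a P1 P2; rewrite /D /Lam Llin.
  rewrite (L'ext (P' := a *: (P1 \Po (- Q' *: 'X)) + (P2 \Po (- Q' *: 'X)))); last first.
    by move=> x; rewrite !(hornerD, hornerZ, horner_comp).
  rewrite L'lin !(hornerD, hornerZ); ring.
have Dext : forall P P', (forall x, P.[x] = P'.[x]) -> D P = D P'.
  move=> P1 P2 hx; rewrite /D /Lam (Lext hx) hx; congr (_ - (_ - _ * _)).
  by apply: L'ext => x; rewrite !horner_comp hx.
have Dsh : forall P, q * D (s *: (P \Po (Q *: 'X + 1))) + D P = 0.
  move=> P1; rewrite /D.
  have e1 := Lsh P1.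
  pose Rp := P1 \Po (1 - 'X).
  have e2 := L'sh Rp.
  have e3 : L' (s' *: (Rp \Po (Q' *: 'X + 1))) = s' * L' (P1 \Po (- Q' *: 'X)).
    rewrite -(FZ L'lin); apply: L'ext => x.
    rewrite !(hornerZ, horner_comp, hornerD, hornerN, hornerX, hornerC, hornerZ, hornerN).
    congr (_ * P1.[_]); ring.
  have e4 : L' ((s *: (P1 \Po (Q *: 'X + 1))) \Po (- Q' *: 'X)) = s * L' Rp.
    rewrite -(FZ L'lin); apply: L'ext => x.
    rewrite !(hornerZ, horner_comp, hornerD, hornerN, hornerX, hornerC, hornerZ, hornerN).
    congr (_ * P1.[_]); rewrite eQ; field; exact: Q0.
  have e5 : Rp.[0] = P1.[1] by rewrite /Rp horner_comp hornerD hornerN hornerX hornerC subr0.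
  have e6 : (s *: (P1 \Po (Q *: 'X + 1))).[0] = s * P1.[1].
    by rewrite hornerZ horner_comp hornerD hornerZ hornerX hornerC mulr0 add0r.
  rewrite /Lam e4 e6.
  rewrite e3 e5 es in e2.
  have hL : q * L (s *: (P1 \Po (Q *: 'X + 1))) = (1 + q) * P1.[0] - L P1 by rewrite -e1 addrK.
  have e7 : q * L' (P1 \Po (- Q' *: 'X)) = q ^+ 2 * s * ((1 + q^-1) * P1.[1] - L' Rp).
    rewrite -e2 addrK; field; by rewrite q0 s0.
  rewrite mulrBr hL.
  have -> : q * ((1 + q) * (s * P1.[1]) - q * (s * L' Rp)) = q ^+ 2 * s * ((1 + q^-1) * P1.[1] - L' Rp).
    field; exact: q0.
  rewrite -e7; ring.
have nz : forall j, 1 + q * s * Q ^+ j != 0 by move=> j; apply: U_1p; rewrite !U_mul // U_exp.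
exact: (F_zero Dlin Dext Dsh nz).
Qed.

Lemma L_oneminus j : (0 < j)%N -> L ((1 - 'X) ^+ j) = (1 + q) + q ^+ (h + 1) * L' 'X^j.
Proof.
move=> j0; rewrite L_Lam /Lam.
rewrite horner_exp hornerD hornerN hornerX hornerC subr0 expr1n mulr1.
have e2 := L'sh 'X^j.
rewrite hornerXn expr0n (gtn_eqF j0) mulr0 in e2.
have e3 : L' (s' *: ('X^j \Po (Q' *: 'X + 1))) = s' * L' ((1 - 'X) ^+ j \Po (- Q' *: 'X)).
  rewrite -(FZ L'lin); apply: L'ext => x.
  rewrite !(hornerZ, horner_comp, hornerD, hornerN, hornerX, hornerC, hornerXn, horner_exp).
  congr (_ * _); congr (_ ^+ _); ring.
rewrite e3 es in e2.
have e4 : L' ((1 - 'X) ^+ j \Po (- Q' *: 'X)) = - (q * s * L' 'X^j).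
  apply/eqP; rewrite -subr_eq0 opprK; apply/eqP.
  have : q * s * (q^-1 * (s^-1 * L' ((1 - 'X) ^+ j \Po (- Q' *: 'X))) + L' 'X^j) = 0 by rewrite e2 mulr0.
  move=> <-; field; by rewrite q0 s0.
rewrite e4.
have eh : q ^+ (h + 1) = q ^+ 2 * s by rewrite /s -exprD; congr (_ ^+ _); lia.
rewrite eh; ring.
Qed.

Lemma G_L m : Gtilde abs p q alpha h m.+1 / (m.+1)%:R = L 'X^m.
Proof.
rewrite /Gtilde /L /Lfun /=.
have -> : (fun xi => q ^+ ((h - 1) * xi) * qnum (q ^+ alpha) xi ^+ m) = fP s Q 'X^m.
  by apply: functional_extensionality => x; rewrite /fP hornerXn exprM.
have hm : (m.+1%:R : K) != 0 by apply: char0.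
by rewrite mulrC mulrA mulVf // mul1r.
Qed.

Lemma G'_L' m : Gtilde abs p q^-1 alpha h m.+1 / (m.+1)%:R = L' 'X^m.
Proof.
rewrite /Gtilde /L' /Lfun /=.
have -> : (fun xi => q^-1 ^+ ((h - 1) * xi) * qnum (q^-1 ^+ alpha) xi ^+ m) = fP s' Q' 'X^m.
  by apply: functional_extensionality => x; rewrite /fP hornerXn exprM.
have hm : (m.+1%:R : K) != 0 by apply: char0.
by rewrite mulrC mulrA mulVf // mul1r.
Qed.

Lemma main_sum n k : (k < n)%N ->
  \sum_(l < (n - k).+1)
     ('C(n - k, l)%:R * (-1) ^+ l
      * (Gtilde abs p q alpha h (l + k + 1) / (l + k + 1)%:R))
  = \sum_(l < k.+1)
        ('C(k, l)%:R * (-1) ^+ (k + l)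
         * ((1 + q) + q ^+ (h + 1)
              * (Gtilde abs p q^-1 alpha h (n - l + 1) / (n - l + 1)%:R))).
Proof.
move=> hkn.
set m := (n - k)%N.
have m0 : (0 < m)%N by rewrite /m subn_gt0.
have e1 : \sum_(l < m.+1) ('C(m, l)%:R * (-1) ^+ l
      * (Gtilde abs p q alpha h (l + k + 1) / (l + k + 1)%:R))
   = \sum_(l < m.+1) ('C(m, l)%:R * (-1) ^+ l) * L 'X^(l + k).
  by apply: eq_bigr => l _; rewrite addn1 G_L.
rewrite e1 -(F_comb Llin Lext (P := 'X^k * (1 - 'X) ^+ m)); last first.
  move=> x; rewrite hornerM hornerXn horner_exp hornerD hornerN hornerX hornerC.
  rewrite [1 - x]addrC exprD1n mulr_sumr; apply: eq_bigr => l _.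
  by rewrite hornerXn exprD -mulr_natr [(- x) ^+ _]exprNn; ring.
rewrite (F_comb Llin Lext (c := fun l : 'I_k.+1 => 'C(k, l)%:R * (-1) ^+ l)
                          (Ps := fun l : 'I_k.+1 => (1 - 'X) ^+ (l + m))); last first.
  move=> x; rewrite hornerM hornerXn horner_exp hornerD hornerN hornerX hornerC.
  rewrite {1}(_ : x = - (1 - x) + 1); last by rewrite opprB subrK.
  rewrite exprD1n mulr_suml; apply: eq_bigr => l _.
  rewrite horner_exp hornerD hornerN hornerX hornerC (exprNn (1 - x)) exprD -mulr_natr; ring.
rewrite (reindex_inj rev_ord_inj) /=.
apply: eq_bigr => i _.
have hi : (i <= k)%N by rewrite -ltnS.
rewrite subSS L_oneminus; last by rewrite addn_gt0 m0 orbT.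
rewrite bin_sub // -signr_odd oddB // -oddD signr_odd.
have -> : (k - i + m)%N = (n - i)%N by rewrite /m; lia.
by rewrite [(n - i + 1)%N]addn1 G'_L'.
Qed.

End Main.
End Work.

Unset Implicit Arguments.

Theorem mainTheorem6 (K : closedFieldType) (R : realType) (p : nat)
  (abs : K -> R) (HK : padic_abs p abs)
  (Hp : prime p) (Hodd : odd p)
  (q : K) (Hq : abs (q - 1) < 1)
  (alpha h : nat) (Hh : (0 < h)%N) (n k : nat) (Hkn : (k < n)%N) :
  \sum_(l < (n - k).+1)
     ('C(n - k, l)%:R * (-1) ^+ l
      * (Gtilde abs p q alpha h (l + k + 1) / (l + k + 1)%:R))
  = if k == 0%N then
      (1 + q) + q ^+ (h + 1)
                * (Gtilde abs p q^-1 alpha h (n + 1) / (n + 1)%:R)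
    else
      \sum_(l < k.+1)
        ('C(k, l)%:R * (-1) ^+ (k + l)
         * ((1 + q) + q ^+ (h + 1)
              * (Gtilde abs p q^-1 alpha h (n - l + 1) / (n - l + 1)%:R))).
Proof.
rewrite (main_sum HK Hp Hodd alpha Hq Hh Hkn).
case: eqP => [k0|//]; subst k.
by rewrite big_ord1 /= bin0 expr0 mul1r subn0 mul1r.
Qed.
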